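(* Let $Q$ and $C$ be fixed probability measures on $(\mathcal{X},\mathcal{A})$ with disjoint supports, and for a sequence $\delta_N\in(0,1)$ let $P=P_N=(1-\delta_N)Q+\delta_NC$, so that $\lambda_N=\mathrm{TV}(P_N,Q)=\delta_N$. Consider the model of all such sequences $(\delta_N)_{N\ge1}$. Then for every $\varepsilon\in(0,1]$, $$\underline\gamma^{\hat\lambda_{\mathrm{bayes}}}(\varepsilon)=\underline\gamma^{\mathrm{oracle}}(\varepsilon)=-1.$$
   Context: Setting: for each $N$, $m=m_N,n=n_N$ are deterministic positive integers, $N=m+n$, $m\le n$, $m/N\to\pi\in(0,1)$; independent samples $X_1,\dots,X_m$ i.i.d. $\sim P_N$ and $Y_1,\dots,Y_n$ i.i.d. $\sim Q$; $\alpha\in(0,1)$ fixed; $f,g$ are densities of $P_N,Q$ w.r.t. a common dominating measure and $\rho^*(z)=g(z)/(f(z)+g(z))$. For $t\in[0,1]$: $F(t)=P_N(\rho^*(X)\le t)$, $G(t)=Q(\rho^*(Y)\le t)$, $\hat F_m,\hat G_n$ the corresponding empirical distribution functions of $\rho^*(X_i)$ and $\rho^*(Y_j)$, $\sigma(t)=\sqrt{F(t)(1-F(t))/m+G(t)(1-G(t))/n}$, and $\hat\lambda^{\rho^*}(t)=\hat F_m(t)-\hat G_n(t)-q_{1-\alpha}\sigma(t)$ ($q_{1-\alpha}$ the standard normal quantile). The estimator $\hat\lambda_{\mathrm{bayes}}=\hat A_0+\hat A_1-1-q_{1-\alpha}\hat\sigma$ with $\hat A_0=\frac1m\sum_i\mathbf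 1\{\rho^*(X_i)\le1/2\}$, $\hat A_1=\frac1n\sum_j\mathbf 1\{\rho^*(Y_j)>1/2\}$, $\hat\sigma=\sqrt{\hat A_0(1-\hat A_0)/m+\hat A_1(1-\hat A_1)/n}$. $h_1\asymp h_2$ means both ratios have finite limsup. For an estimator $\hat\lambda$ and $\varepsilon\in(0,1]$, $\underline\gamma^{\hat\lambda}(\varepsilon)$ is the infimum of all $\gamma_0\in[-1,0)$ such that for every $\gamma\in(\gamma_0,0)$ and every sequence in the model with $\lambda_N\asymp N^\gamma$, $\mathbb{P}(\hat\lambda>(1-\varepsilon)\lambda_N)\to1$. $\underline\gamma^{\mathrm{oracle}}(\varepsilon)$ is the infimum of all $\gamma_0\in[-1,0)$ such that for every $\gamma\in(\gamma_0,0)$ and every sequence in the model with $\lambda_N\asymp N^\gamma$ there is a deterministic $(t_N)\subset[0,1]$ with $\mathbb{P}(\hat\lambda^{\rho^*}(t_N)>(1-\varepsilon)\lambda_N)\to1$. *)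

(* Defs.v *)
From HB Require Import structures.
From mathcomp Require Import all_boot all_order all_algebra.
From mathcomp Require Import all_classical all_reals all_analysis.
From mathcomp Require Import normal_distribution.

Set Implicit Arguments.
Unset Strict Implicit.
Unset Printing Implicit Defensive.

Import Order.TTheory GRing.Theory Num.Theory.
Import numFieldNormedType.Exports.
Local Open Scope classical_set_scope.
Local Open Scope ring_scope.

Section defs.
Context {R : realType} {d : measure_display} {T : measurableType d}.

Definition TV (P Q : probability T R) : R :=
  sup [set r : R | exists A, measurable A /\ r = `|fine (P A) - fine (Q A)|].

Definition is_density (mu : {measure set T -> \bar R}) (P : set T -> \bar R)
  (f : T -> R) : Prop :=
  measurable_fun setT f /\ (forall x, 0 <= f x) /\
  forall A, measurable A -> P A = (\int[mu]_(x in A) (f x)%:E)%E.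

Definition rho_star (f g : T -> R) (z : T) : R := g z / (f z + g z).

Definition emp_cdf (k : nat) (r : T -> R) (Z : 'I_k -> T) (t : R) : R :=
  k%:R^-1 * \sum_(i < k) (nat_of_bool (r (Z i) <= t))%:R.

Definition cdf_of (P : probability T R) (r : T -> R) (t : R) : R :=
  fine (P [set z | r z <= t]).

Definition sigma_or (m n : nat) (P Q : probability T R) (r : T -> R) (t : R) : R :=
  Num.sqrt (cdf_of P r t * (1 - cdf_of P r t) / m%:R
            + cdf_of Q r t * (1 - cdf_of Q r t) / n%:R).

Definition lambda_oracle (m n : nat) (q : R) (P Q : probability T R) (r : T -> R)
  (X : 'I_m -> T) (Y : 'I_n -> T) (t : R) : R :=
  emp_cdf r X t - emp_cdf r Y t - q * sigma_or m n P Q r t.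

Definition A0hat (m : nat) (r : T -> R) (X : 'I_m -> T) : R :=
  m%:R^-1 * \sum_(i < m) (nat_of_bool (r (X i) <= 2^-1))%:R.
Definition A1hat (n : nat) (r : T -> R) (Y : 'I_n -> T) : R :=
  n%:R^-1 * \sum_(j < n) (nat_of_bool (2^-1 < r (Y j)))%:R.
Definition lambda_bayes (m n : nat) (q : R) (r : T -> R)
  (X : 'I_m -> T) (Y : 'I_n -> T) : R :=
  A0hat r X + A1hat r Y - 1 - q * Num.sqrt (A0hat r X * (1 - A0hat r X) / m%:R
                                           + A1hat r Y * (1 - A1hat r Y) / n%:R).

Definition iid_samples {dO : measure_display} {Omega : measurableType dO}
  (Pr : probability Omega R) (m n : nat) (P Q : probability T R)
  (X : 'I_m -> Omega -> T) (Y : 'I_n -> Omega -> T) : Prop :=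
  (forall i, measurable_fun setT (X i)) /\ (forall j, measurable_fun setT (Y j)) /\
  forall (A : 'I_m -> set T) (B : 'I_n -> set T),
    (forall i, measurable (A i)) -> (forall j, measurable (B j)) ->
    fine (Pr ((\bigcap_(i in [set: 'I_m]) (X i @^-1` A i))
               `&` (\bigcap_(j in [set: 'I_n]) (Y j @^-1` B j))))
    = (\prod_(i < m) fine (P (A i))) * (\prod_(j < n) fine (Q (B j))).

End defs.

Definition asymp {R : realType} (h1 h2 : nat -> R) : Prop :=
  limn_esup (fun N => (h1 N / h2 N)%:E) \is a fin_num /\
  limn_esup (fun N => (h2 N / h1 N)%:E) \is a fin_num.

Definition in_model {R : realType} {d : measure_display} {T : measurableType d}
  (Q C : probability T R) (delta : nat -> R) (P : nat -> probability T R) : Prop :=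
  (forall N, 0 < delta N < 1) /\
  forall N A, measurable A ->
    P N A = ((1 - delta N)%:E * Q A + (delta N)%:E * C A)%E.

Definition bayes_ok {R : realType} {d : measure_display} {T : measurableType d}
  (Q C : probability T R) (m n : nat -> nat) (q eps gamma0 : R) : Prop :=
  forall gamma : R, gamma0 < gamma < 0 ->
  forall (delta : nat -> R) (P : nat -> probability T R), in_model Q C delta P ->
  asymp (fun N => TV (P N) Q) (fun N => (N%:R : R) `^ gamma) ->
  forall (mu : nat -> {measure set T -> \bar R}) (f g : nat -> T -> R),
  (forall N, is_density (mu N) (P N) (f N) /\ is_density (mu N) Q (g N)) ->
  forall (dO : nat -> measure_display) (Omega : forall N, measurableType (dO N))
    (Pr : forall N, probability (Omega N) R)
    (X : forall N, 'I_(m N) -> Omega N -> T) (Y : forall N, 'I_(n N) -> Omega N -> T),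
  (forall N, iid_samples (Pr N) (P N) Q (X N) (Y N)) ->
  (fun N => fine (Pr N [set w | (1 - eps) * TV (P N) Q <
      lambda_bayes q (rho_star (f N) (g N)) (fun i => X N i w) (fun j => Y N j w)]))
    @ \oo --> (1 : R).

Definition oracle_ok {R : realType} {d : measure_display} {T : measurableType d}
  (Q C : probability T R) (m n : nat -> nat) (q eps gamma0 : R) : Prop :=
  forall gamma : R, gamma0 < gamma < 0 ->
  forall (delta : nat -> R) (P : nat -> probability T R), in_model Q C delta P ->
  asymp (fun N => TV (P N) Q) (fun N => (N%:R : R) `^ gamma) ->
  forall (mu : nat -> {measure set T -> \bar R}) (f g : nat -> T -> R),
  (forall N, is_density (mu N) (P N) (f N) /\ is_density (mu N) Q (g N)) ->
  exists t : nat -> R, (forall N, 0 <= t N <= 1) /\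
  forall (dO : nat -> measure_display) (Omega : forall N, measurableType (dO N))
    (Pr : forall N, probability (Omega N) R)
    (X : forall N, 'I_(m N) -> Omega N -> T) (Y : forall N, 'I_(n N) -> Omega N -> T),
  (forall N, iid_samples (Pr N) (P N) Q (X N) (Y N)) ->
  (fun N => fine (Pr N [set w | (1 - eps) * TV (P N) Q <
      lambda_oracle q (P N) Q (rho_star (f N) (g N))
        (fun i => X N i w) (fun j => Y N j w) (t N)]))
    @ \oo --> (1 : R).

Definition gamma_bayes {R : realType} {d : measure_display} {T : measurableType d}
  (Q C : probability T R) (m n : nat -> nat) (q eps : R) : R :=
  inf [set gamma0 : R | -1 <= gamma0 < 0 /\ bayes_ok Q C m n q eps gamma0].

Definition gamma_oracle {R : realType} {d : measure_display} {T : measurableType d}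
  (Q C : probability T R) (m n : nat -> nat) (q eps : R) : R :=
  inf [set gamma0 : R | -1 <= gamma0 < 0 /\ oracle_ok Q C m n q eps gamma0].

(* Main.v *)
Require Import Defs.
From HB Require Import structures.
From mathcomp Require Import all_boot all_order all_algebra.
From mathcomp Require Import all_classical all_reals all_analysis.
From mathcomp Require Import normal_distribution measurable_realfun.
From mathcomp Require Import ring lra.
Import Order.TTheory GRing.Theory Num.Theory.
Import numFieldNormedType.Exports.
Local Open Scope classical_set_scope.
Local Open Scope ring_scope.
Set Implicit Arguments.
Unset Strict Implicit.

Section PrLemmas.
Context {R : realType} {dO : measure_display} {Om : measurableType dO}
  (Pr : probability Om R).

Definition pr (A : set Om) : R := fine (Pr A).

Lemma prE A : measurable A -> Pr A = (pr A)%:E.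
Proof.
move=> mA; rewrite /pr fineK// ge0_fin_numE ?measure_ge0//.
apply: (le_lt_trans _ (ltry 1)); rewrite -(probability_setT Pr).
by apply: le_measure; rewrite ?inE.
Qed.

Lemma pr_ge0 A : 0 <= pr A.
Proof. by rewrite /pr fine_ge0// measure_ge0. Qed.

Lemma pr_le1 A : measurable A -> pr A <= 1.
Proof. by move=> mA; have := probability_le1 Pr mA; rewrite prE// lee_fin. Qed.

Lemma prT : pr setT = 1.
Proof. by rewrite /pr probability_setT. Qed.

Lemma prU A B : measurable A -> measurable B -> A `&` B = set0 ->
  pr (A `|` B) = pr A + pr B.
Proof.
move=> mA mB AB; have : Pr (A `|` B) = Pr A + Pr B by rewrite measureU.
by rewrite !prE//; [move=> [] | exact: measurableU].
Qed.

Lemma pr_le A B : measurable A -> measurable B -> A `<=` B -> pr A <= pr B.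
Proof.
move=> mA mB AB; rewrite -lee_fin -!prE//.
by apply: le_measure; rewrite ?inE.
Qed.

Lemma bigU_mem (I : eqType) (s : seq I) (P : pred I) (F : I -> set Om) w :
  (\big[setU/set0]_(i <- s | P i) F i) w <-> exists i, [/\ i \in s, P i & F i w].
Proof.
elim: s => [|a s IH]; first by rewrite big_nil; split => [//|[i []]].
rewrite big_cons; case: ifP => Pa.
  split; first case.
  - by move=> Faw; exists a; split => //; rewrite inE eqxx.
  - by move/IH => [i [? ? ?]]; exists i; split => //; rewrite inE orbC; apply/orP; left.
  move=> [i []]; rewrite inE => /orP[/eqP ->|ins] Pi Fi; [by left|right].
  by apply/IH; exists i.
rewrite IH; split => -[i [ins Pi Fi]]; exists i; split => //.
  by rewrite inE ins orbT.
move: ins; rewrite inE => /orP[/eqP ai|//]; subst.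
by rewrite Pa in Pi.
Qed.

Lemma pr_big (I : eqType) (s : seq I) (P : pred I) (F : I -> set Om) :
  uniq s -> (forall i, measurable (F i)) ->
  (forall i j, i != j -> F i `&` F j = set0) ->
  pr (\big[setU/set0]_(i <- s | P i) F i) = \sum_(i <- s | P i) pr (F i).
Proof.
move=> + mF dF; elim: s => [|a s IH]; first by rewrite !big_nil /pr measure0.
rewrite /= => /andP[nas us]; rewrite !big_cons; case: ifP => Pa; last exact: IH.
rewrite prU//; first by rewrite IH.
  exact: bigsetU_measurable.
apply/seteqP; split => // w [Fa /bigU_mem [i [ins Pi Fi]]].
have ai : a != i by by apply: contraNneq nas => ->.
by rewrite -(dF _ _ ai).
Qed.

End PrLemmas.

Section Binom.
Context {R : realType} {dO : measure_display} {Om : measurableType dO}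
  (Pr : probability Om R) (m : nat) (E : 'I_m -> set Om) (G : set Om) (p : R).
Hypotheses (mE : forall i, measurable (E i)) (mG : measurable G)
  (hrect : forall S : {set 'I_m},
     pr Pr (G `&` [set w | forall i, i \in S -> E i w]) = p ^+ #|S|).

Definition Kw w : {set 'I_m} := [set i | `[< E i w >]].
Definition atom K := G `&` [set w | Kw w = K].

Lemma atomE K : atom K = G `&` \bigcap_(i in setT) (if i \in K then E i else ~` E i).
Proof.
apply/seteqP; split => w [Gw H]; split => //.
  move=> i _ /=; rewrite -H inE; case: asboolP => //.
apply/setP => i; rewrite inE; have := H i Logic.I; case: ifP => iK h.
  by apply/asboolP.
by apply/negbTE/asboolPn.
Qed.

Lemma atom_meas K : measurable (atom K).
Proof.
rewrite atomE; apply: measurableI => //; apply: fin_bigcap_measurable.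
  exact: finite_finset.
by move=> i _; case: ifP => _; [exact: mE|exact: measurableC].
Qed.

Lemma atom_disj K K' : K != K' -> atom K `&` atom K' = set0.
Proof.
move=> KK; apply/seteqP; split => // w [[_ h1] [_ h2]].
by move: KK; rewrite /= in h1 h2; rewrite -h1 -h2 eqxx.
Qed.

Lemma pr_pred (Phi : pred {set 'I_m}) :
  pr Pr (G `&` [set w | Phi (Kw w)]) = \sum_(K | Phi K) pr Pr (atom K).
Proof.
have -> : G `&` [set w | Phi (Kw w)] =
    \big[setU/set0]_(K <- index_enum {set 'I_m} | Phi K) atom K.
  apply/seteqP; split => w.
    move=> [Gw Pw]; apply/bigU_mem; exists (Kw w); split => //.
  by move/bigU_mem => [K [_ PK [Gw KwK]]]; split => //=; rewrite KwK.
rewrite pr_big //; [exact: index_enum_uniq | exact: atom_meas | exact: atom_disj].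
Qed.

Lemma meas_pred (Phi : pred {set 'I_m}) : measurable (G `&` [set w | Phi (Kw w)]).
Proof.
have -> : G `&` [set w | Phi (Kw w)] =
    \big[setU/set0]_(K <- index_enum {set 'I_m} | Phi K) atom K.
  apply/seteqP; split => w.
    move=> [Gw Pw]; apply/bigU_mem; exists (Kw w); split => //.
  by move/bigU_mem => [K [_ PK [Gw KwK]]]; split => //=; rewrite KwK.
by apply: bigsetU_measurable => K _; exact: atom_meas.
Qed.

Lemma sum_super (S : {set 'I_m}) : \sum_(K : {set 'I_m} | S \subset K) pr Pr (atom K) = p ^+ #|S|.
Proof.
rewrite -pr_pred -hrect; congr (pr Pr _); apply/seteqP; split => w [Gw H]; split => //=.
  by move=> i iS; have := fintype.subsetP H i iS; rewrite inE => /asboolP.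
by apply/fintype.subsetP => i iS; rewrite inE; apply/asboolP; exact: H.
Qed.

Let wt K := pr Pr (atom K).

Lemma sum_wt : \sum_(K : {set 'I_m}) wt K = 1.
Proof.
have := sum_super finset.set0; rewrite cards0 expr0 => <-.
by apply: eq_bigl => K; rewrite finset.sub0set.
Qed.

Lemma cK (K : {set 'I_m}) : #|K|%:R = \sum_i (i \in K)%:R :> R.
Proof.
rewrite -sum1_card natr_sum big_mkcond /=; apply: eq_bigr => i _.
by case: (i \in K).
Qed.

Lemma sum_card : \sum_(K : {set 'I_m}) #|K|%:R * wt K = m%:R * p.
Proof.
under eq_bigr do rewrite cK mulr_suml.
rewrite exchange_big /=.
transitivity (\sum_(i < m) p); last by rewrite sumr_const card_ord mulr_natl.
apply: eq_bigr => i _.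
rewrite -[p]expr1 -(cards1 i) -sum_super [RHS]big_mkcond /=.
apply: eq_bigr => K _; rewrite finset.sub1set; case: (i \in K) => /=.
  by rewrite mul1r.
by rewrite mul0r.
Qed.

Lemma sum_card2 : \sum_(K : {set 'I_m}) #|K|%:R ^+ 2 * wt K = m%:R * p + m%:R * (m%:R - 1) * p ^+ 2.
Proof.
have c2 (K : {set 'I_m}) : #|K|%:R ^+ 2 * wt K =
    \sum_i \sum_j ((i \in K)%:R * (j \in K)%:R * wt K).
  rewrite expr2 {1}cK mulr_suml mulr_suml; apply: eq_bigr => i _.
  rewrite -mulrA cK mulr_suml mulr_sumr; apply: eq_bigr => j _.
  by rewrite mulrA.
under eq_bigr do rewrite c2.
rewrite exchange_big /=.
under eq_bigr do rewrite exchange_big /=.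
transitivity (\sum_(i < m) (p + (m%:R - 1) * p ^+ 2)).
  apply: eq_bigr => i _.
  transitivity (\sum_(j < m) p ^+ #|[set i; j]%SET|).
    apply: eq_bigr => j _.
    rewrite -sum_super [RHS]big_mkcond /=.
    apply: eq_bigr => K _; rewrite finset.subUset !finset.sub1set.
    by case: (i \in K); case: (j \in K); rewrite /= ?mul1r ?mul0r ?mulr0 ?mulr1.
  rewrite (bigD1 i) //= finset.setUid cards1 expr1; congr (_ + _).
  transitivity (\sum_(j < m | j != i) p ^+ 2).
    by apply: eq_bigr => j ji; rewrite cards2 eq_sym ji.
  rewrite sumr_const cardC1 card_ord -mulr_natl.
  have m0 : (0 < m)%N by apply: leq_ltn_trans (leq0n i) (ltn_ord i).
  by rewrite -[in RHS](prednK m0) -natr1 mulr1 addrK mulr_natl.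
by rewrite sumr_const card_ord -mulr_natl; ring.
Qed.

Lemma sum_var : \sum_(K : {set 'I_m}) (#|K|%:R - m%:R * p) ^+ 2 * wt K = m%:R * p * (1 - p).
Proof.
have e (K : {set 'I_m}) : (#|K|%:R - m%:R * p) ^+ 2 * wt K =
  #|K|%:R ^+ 2 * wt K - (2 * m%:R * p) * (#|K|%:R * wt K) + (m%:R * p) ^+ 2 * wt K.
  by ring.
under eq_bigr do rewrite e.
rewrite big_split sumrB /= -!mulr_sumr sum_card2 sum_card sum_wt.
ring.
Qed.

Lemma conc t : 0 < t ->
  1 - m%:R * p * (1 - p) / t <=
  pr Pr (G `&` [set w | (#|Kw w|%:R - m%:R * p) ^+ 2 < t]).
Proof.
move=> t0.
pose good := fun K : {set 'I_m} => (#|K|%:R - m%:R * p) ^+ 2 < t.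
rewrite (pr_pred good).
have h := sum_wt; rewrite (bigID good) /= in h.
suff hb : \sum_(K | ~~ good K) wt K <= m%:R * p * (1 - p) / t.
  move: h hb; rewrite /wt.
  set a := \sum_(K | good K) _; set b := \sum_(K | ~~ good K) _.
  move=> h hb; lra.
rewrite -sum_var mulr_suml.
rewrite [leRHS](bigID good) /= -[leLHS]add0r.
apply: lerD.
  apply: sumr_ge0 => K _; apply: mulr_ge0; last by rewrite invr_ge0 ltW.
  by apply: mulr_ge0; [exact: sqr_ge0|exact: pr_ge0].
apply: ler_sum => K; rewrite /good -leNgt => hK.
rewrite mulrAC; apply: ler_peMl; first exact: pr_ge0.
by rewrite ler_pdivlMr // mul1r.
Qed.

End Binom.

Section Pattern.
Context {dO : measure_display} {Om : measurableType dO}.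

Lemma meas_eqb (b : Om -> bool) (c : bool) : measurable [set w | b w] ->
  measurable [set w | b w = c].
Proof.
move=> mb; case: c => //.
have -> : [set w | b w = false] = ~` [set w | b w].
  by apply/seteqP; split => w /=; [move=> ->|move/negP/negbTE].
exact: measurableC.
Qed.

Lemma meas_all (I : finType) (b : I -> Om -> bool) (c : I -> bool) :
  (forall i, measurable [set w | b i w]) ->
  measurable [set w | forall i, b i w = c i].
Proof.
move=> mb.
have -> : [set w | forall i, b i w = c i] = \bigcap_(i in setT) [set w | b i w = c i].
  by apply/seteqP; split => w /= H i; [move=> _; exact: H|exact: (H i Logic.I)].
apply: fin_bigcap_measurable; first exact: finite_finset.
by move=> i _; apply: meas_eqb.
Qed.

Lemma meas_pattern (I1 I2 : finType) (b1 : I1 -> Om -> bool) (b2 : I2 -> Om -> bool)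
  (h1 : forall i, measurable [set w | b1 i w])
  (h2 : forall j, measurable [set w | b2 j w])
  (Psi : (I1 -> bool) -> (I2 -> bool) -> Prop) :
  measurable [set w | Psi (fun i => b1 i w) (fun j => b2 j w)].
Proof.
have -> : [set w | Psi (fun i => b1 i w) (fun j => b2 j w)] =
  \bigcup_(ph in [set ph : {ffun I1 -> bool} * {ffun I2 -> bool} | Psi ph.1 ph.2])
    ([set w | forall i, b1 i w = ph.1 i] `&` [set w | forall j, b2 j w = ph.2 j]).
  apply/seteqP; split => w.
    move=> Hw; exists ([ffun i => b1 i w], [ffun j => b2 j w]).
      have e : Psi (fun i => b1 i w) (fun j => b2 j w) =
          Psi ([ffun i => b1 i w] : I1 -> bool) ([ffun j => b2 j w] : I2 -> bool).
        by congr Psi; apply: funext => i; rewrite ffunE.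
      by rewrite /= -e.
    by split => /= i; rewrite ffunE.
  move=> [[ph1 ph2] /= Pph [/= e1 e2]].
  have -> : (fun i => b1 i w) = ph1 by apply: funext => i; exact: e1.
  by have -> : (fun j => b2 j w) = ph2 by apply: funext => j; exact: e2.
apply: fin_bigcup_measurable; first exact: finite_finset.
by move=> ph _; apply: measurableI; apply: meas_all.
Qed.

End Pattern.

Lemma qy_bound {R : realType} (eps M q y : R) : 0 < eps -> 0 < M ->
  4 * (eps * M * (q * y)) <= eps ^+ 2 * M * (M * y ^+ 2) + 4 * q ^+ 2.
Proof.
move=> e0 M0; have := sqr_ge0 (eps * M * y - 2 * q).
move=> h; nra.
Qed.

Lemma ineq_b {R : realType} (a0 delta eps q M : R) : 0 < eps <= 1 -> 0 < delta ->
  0 < M -> 0 <= a0 <= 1 -> (1 - eps / 2) * delta < a0 ->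
  4 * q ^+ 2 < eps ^+ 2 * M * delta ->
  (1 - eps) * delta < a0 - q * Num.sqrt (a0 * (1 - a0) / M).
Proof.
move=> /andP[e0 e1] d0 M0 /andP[a00 a01] ha hq.
set y := Num.sqrt _.
have y0 : 0 <= y by apply: sqrtr_ge0.
have hy : M * y ^+ 2 <= a0.
  rewrite sqr_sqrtr; last by apply: divr_ge0; [apply: mulr_ge0; lra|exact: ltW].
  rewrite mulrC divfK; last by rewrite gt_eqF.
  nra.
have k1 := qy_bound q y e0 M0.
have k3 : eps ^+ 2 * M * (M * y ^+ 2) <= eps ^+ 2 * M * a0.
  by apply: ler_wpM2l => //; apply: mulr_ge0 => //; [exact: sqr_ge0|exact: ltW].
have eM : 0 < eps * M by apply: mulr_gt0.
rewrite -(ltr_pM2l eM).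
have k2 : eps * M * (1 - eps / 4) * ((1 - eps / 2) * delta) <
          eps * M * (1 - eps / 4) * a0.
  by rewrite ltr_pM2l //; apply: mulr_gt0 => //; lra.
have k4 : 0 <= eps ^+ 3 * M * delta.
  by apply: mulr_ge0; [apply: mulr_ge0; [apply: exprn_ge0; exact: ltW|exact: ltW]|exact: ltW].
nra.
Qed.

Lemma ineq_o {R : realType} (a0 delta eps q M : R) : 0 < eps <= 1 -> 0 < delta < 1 ->
  0 < M -> (1 - eps / 2) * delta < a0 ->
  4 * q ^+ 2 < eps ^+ 2 * M * delta ->
  (1 - eps) * delta < a0 - q * Num.sqrt (delta * (1 - delta) / M).
Proof.
move=> /andP[e0 e1] /andP[d0 d1] M0 ha hq.
set y := Num.sqrt _.
have y0 : 0 <= y by apply: sqrtr_ge0.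
have hy : M * y ^+ 2 <= delta.
  rewrite sqr_sqrtr; last by apply: divr_ge0; [apply: mulr_ge0; lra|exact: ltW].
  rewrite mulrC divfK; last by rewrite gt_eqF.
  nra.
have k1 := qy_bound q y e0 M0.
have k3 : eps ^+ 2 * M * (M * y ^+ 2) <= eps ^+ 2 * M * delta.
  by apply: ler_wpM2l => //; apply: mulr_ge0 => //; [exact: sqr_ge0|exact: ltW].
have eM : 0 < eps * M by apply: mulr_gt0.
rewrite -(ltr_pM2l eM).
have k2 : eps * M * ((1 - eps / 2) * delta) < eps * M * a0.
  by rewrite ltr_pM2l.
nra.
Qed.

Lemma rho_half {R : realType} (a b : R) : 0 <= a -> 0 <= b ->
  (b / (a + b) <= 2^-1) = (b <= a).
Proof.
move=> a0 b0; have [s0|s0] := eqVneq (a + b) 0.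
  have a00 : a = 0 by lra.
  have b00 : b = 0 by lra.
  by rewrite s0 invr0 mulr0 a00 b00 lexx invr_ge0 ler0n.
have sp : 0 < a + b by rewrite lt_neqAle eq_sym s0 addr_ge0.
rewrite ler_pdivrMr //; apply/idP/idP => h; lra.
Qed.

Section Model.
Context {R : realType} {d : measure_display} {T : measurableType d}.

Lemma dens_le (mu : {measure set T -> \bar R}) (P1 P2 : probability T R) f1 f2 :
  is_density mu P1 f1 -> is_density mu P2 f2 -> forall B, measurable B ->
  (forall z, B z -> f1 z <= f2 z) -> pr P1 B <= pr P2 B.
Proof.
move=> [mf1 [f10 i1]] [mf2 [f20 i2]] B mB h.
rewrite -lee_fin -!prE // i1 // i2 //; apply: ge0_le_integral => //.
all: try (by move=> x Bx; rewrite lee_fin; first [exact: f10|exact: h]).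
all: apply/measurable_EFinP; first [exact: (measurable_funS measurableT _ mf1)|exact: (measurable_funS measurableT _ mf2)].
Qed.

Lemma pr_split (P : probability T R) B S : measurable B -> measurable S ->
  pr P B = pr P (B `&` S) + pr P (B `&` ~` S).
Proof.
move=> mB mS; rewrite -prU //; first (congr (pr P _); apply/seteqP; split).
- move=> z Bz; have [Sz|nSz] := pselect (S z); [left|right]; done.
- by move=> z [[]|[]].
- exact: measurableI.
- exact/measurableI/measurableC.
- by apply/seteqP; split => // z [[_ ?] [_ ?]].
Qed.

Lemma pr_compl (P : probability T R) B : measurable B -> pr P (~` B) = 1 - pr P B.
Proof.
move=> mB; rewrite -(prT P) (pr_split P measurableT mB) !setTI; lra.
Qed.

Variables (Q C PN : probability T R) (S : set T) (delta : R).
Hypotheses (mS : measurable S) (QS : Q (~` S) = 0%E) (CS : C S = 0%E)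
  (d0 : 0 < delta) (d1 : delta < 1)
  (hP : forall A, measurable A ->
     PN A = ((1 - delta)%:E * Q A + delta%:E * C A)%E).
Variables (mu : {measure set T -> \bar R}) (f g : T -> R).
Hypotheses (df : is_density mu PN f) (dg : is_density mu Q g).

Lemma hPr B : measurable B -> pr PN B = (1 - delta) * pr Q B + delta * pr C B.
Proof. by move=> mB; have := hP mB; rewrite !prE // -!EFinM -EFinD => -[]. Qed.

Lemma prQS : pr Q (~` S) = 0.
Proof. by rewrite /pr QS. Qed.
Lemma prCS : pr C S = 0.
Proof. by rewrite /pr CS. Qed.

Lemma prQnS B : measurable B -> pr Q (B `&` ~` S) = 0.
Proof.
move=> mB; apply/le_anti; rewrite pr_ge0 andbT -prQS.
apply: pr_le => //; try exact: measurableC; try exact/measurableI/measurableC.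
all: by move=> z [].
Qed.

Lemma prCS' B : measurable B -> pr C (B `&` S) = 0.
Proof.
move=> mB; apply/le_anti; rewrite pr_ge0 andbT -prCS.
apply: pr_le => //; try exact/measurableI.
all: by move=> z [].
Qed.

Definition Aset := [set z | rho_star f g z <= 2^-1].

Lemma AsetE : Aset = setT `&` [set z | g z <= f z].
Proof.
case: df => _ [f0 _]; case: dg => _ [g0 _].
apply/seteqP; split => z; rewrite /Aset /rho_star /= rho_half //.
by move=> [].
Qed.

Lemma mAset : measurable Aset.
Proof.
rewrite AsetE; apply: measurable_fun_le => //; [exact: dg.1|exact: df.1].
Qed.

Lemma Aset_le z : Aset z -> g z <= f z.
Proof.
case: df => _ [f0 _]; case: dg => _ [g0 _].
by rewrite /Aset /= /rho_star rho_half.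
Qed.

Lemma nAset_le z : ~ Aset z -> f z <= g z.
Proof.
case: df => _ [f0 _]; case: dg => _ [g0 _].
by rewrite /Aset /= /rho_star rho_half // => /negP; rewrite -ltNge => /ltW.
Qed.

Lemma prQA : pr Q Aset = 0.
Proof.
have mA := mAset.
rewrite (pr_split Q mA mS) prQnS // addr0.
have h1 : pr Q (Aset `&` S) <= pr PN (Aset `&` S).
  apply: (dens_le dg df) => //; first exact: measurableI.
  by move=> z [Az _]; exact: Aset_le.
rewrite hPr in h1; last exact: measurableI.
rewrite prCS' // mulr0 addr0 in h1.
have h0 := pr_ge0 Q (Aset `&` S); apply/eqP; rewrite eq_le h0 andbT.
have h2 : delta * pr Q (Aset `&` S) <= 0 by rewrite mulrBl mul1r in h1; lra.
by rewrite pmulr_rle0 in h2.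
Qed.

Lemma prCnA : pr C (~` Aset) = 0.
Proof.
have mA := mAset; have mnA := measurableC mA.
rewrite (pr_split C mnA mS) prCS' // add0r.
have h1 : pr PN (~` Aset `&` ~` S) <= pr Q (~` Aset `&` ~` S).
  apply: (dens_le df dg) => //; first exact/measurableI/measurableC.
  by move=> z [Az _]; exact: nAset_le.
rewrite hPr in h1; last exact/measurableI/measurableC.
rewrite prQnS // mulr0 add0r in h1.
have h0 := pr_ge0 C (~` Aset `&` ~` S); apply/eqP; rewrite eq_le h0 andbT.
by rewrite pmulr_rle0 in h1.
Qed.

Lemma prPA : pr PN Aset = delta.
Proof.
rewrite hPr; last exact: mAset.
have hq := prQA. rewrite hq mulr0 add0r.
have := pr_compl C mAset; rewrite prCnA => h.
have -> : pr C Aset = 1 by lra.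
by rewrite mulr1.
Qed.

Lemma prQnA : pr Q (~` Aset) = 1.
Proof. have hq := prQA; have hc := pr_compl Q mAset; lra. Qed.

Lemma TV_delta : TV PN Q = delta.
Proof.
set E := [set r : R | exists A, measurable A /\ r = `|fine (PN A) - fine (Q A)|].
have ub : ubound E delta.
  move=> _ [B [mB ->]]; rewrite -/(pr PN B) -/(pr Q B) hPr //.
  have q0 := pr_ge0 Q B; have q1 := pr_le1 Q mB.
  have c0 := pr_ge0 C B; have c1 := pr_le1 C mB.
  have -> : (1 - delta) * pr Q B + delta * pr C B - pr Q B =
    delta * (pr C B - pr Q B) by ring.
  rewrite normrM gtr0_norm // ler_piMr //; first exact: ltW.
  by rewrite ler_norml; apply/andP; split; lra.
have Ed : E delta.
  exists (~` S); split; first exact: measurableC.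
  rewrite -/(pr PN _) -/(pr Q _) hPr ?prQS; last exact: measurableC.
  by rewrite pr_compl // prCS !subr0 mulr0 add0r mulr1 gtr0_norm.
apply/le_anti/andP; split.
  by apply: ge_sup => //; exists delta.
by apply: sup_upper_bound => //; split; [exists delta|exists delta].
Qed.


Variables (m n : nat) (dO : measure_display) (Om : measurableType dO)
  (Pr : probability Om R) (X : 'I_m -> Om -> T) (Y : 'I_n -> Om -> T).
Hypotheses (hiid : iid_samples Pr PN Q X Y) (m0 : (0 < m)%N) (n0 : (0 < n)%N).

Definition Ev i := X i @^-1` Aset.
Definition Gv := \bigcap_(j in setT) (Y j @^-1` (~` Aset)).

Lemma mEv i : measurable (Ev i).
Proof. by rewrite /Ev -[X in measurable X]setTI; apply: hiid.1 => //; exact: mAset. Qed.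

Lemma mGv : measurable Gv.
Proof.
apply: fin_bigcap_measurable; first exact: finite_finset.
move=> j _; rewrite -[X in measurable X]setTI; apply: hiid.2.1 => //.
exact/measurableC/mAset.
Qed.

Lemma hrect (S0 : {set 'I_m}) :
  pr Pr (Gv `&` [set w | forall i, i \in S0 -> Ev i w]) = delta ^+ #|S0|.
Proof.
have hA : forall i, measurable (if i \in S0 then Aset else setT).
  by move=> i; case: ifP => _ //; exact: mAset.
have hB : forall j : 'I_n, measurable (~` Aset) by move=> j; exact/measurableC/mAset.
have := hiid.2.2 _ _ hA hB.
move=> h; rewrite /pr.
have -> : Gv `&` [set w | forall i, i \in S0 -> Ev i w] =
  (\bigcap_(i in [set: 'I_m]) X i @^-1` (if i \in S0 then Aset else setT)) `&`
  (\bigcap_(j in [set: 'I_n]) Y j @^-1` (~` Aset)).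
  apply/seteqP; split => w [H1 H2].
    by split => // i _ /=; case: ifP => // iS; exact: H2.
  by split => // i iS; have := H1 i Logic.I; rewrite /= iS.
rewrite h.
have hq := prQnA.
rewrite [X in _ * X]big1 ?mulr1; last by move=> j _; exact: hq.
have hp := prPA.
rewrite (eq_bigr (fun i => if i \in S0 then delta else 1)); last first.
  by move=> i _; case: ifP => _ //; rewrite probability_setT.
by rewrite -big_mkcond /= prodr_const.
Qed.

Definition tt0 (eps : R) := (eps / 2 * (m%:R * delta)) ^+ 2.

Lemma conc_model (eps : R) : 0 < eps ->
  1 - 4 / (eps ^+ 2 * (m%:R * delta)) <=
  pr Pr (Gv `&` [set w | (#|Kw Ev w|%:R - m%:R * delta) ^+ 2 < tt0 eps]).
Proof.
move=> e0.
have mpos : 0 < m%:R * delta :> R by apply: mulr_gt0; rewrite ?ltr0n.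
have t0 : 0 < tt0 eps by rewrite /tt0 exprn_gt0 // mulr_gt0 // divr_gt0.
apply: le_trans (conc mEv mGv hrect t0).
rewrite lerD2l lerN2 /tt0.
have -> : 4 / (eps ^+ 2 * (m%:R * delta)) =
  m%:R * delta / (eps / 2 * (m%:R * delta)) ^+ 2.
  field; rewrite !gt_eqF // ltr0n //.
rewrite ler_pM2r; last by rewrite invr_gt0 exprn_gt0 // mulr_gt0 // divr_gt0.
by rewrite ger_pMr // gerBl ltW.
Qed.


Definition lamb_b (q : R) (u : 'I_m -> bool) (v : 'I_n -> bool) : R :=
  let a0 := m%:R^-1 * \sum_(i < m) (nat_of_bool (u i))%:R in
  let a1 := n%:R^-1 * \sum_(j < n) (nat_of_bool (v j))%:R in
  a0 + a1 - 1 - q * Num.sqrt (a0 * (1 - a0) / m%:R + a1 * (1 - a1) / n%:R).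

Definition lamb_o (q s : R) (u : 'I_m -> bool) (v : 'I_n -> bool) : R :=
  m%:R^-1 * \sum_(i < m) (nat_of_bool (u i))%:R -
  n%:R^-1 * \sum_(j < n) (nat_of_bool (v j))%:R - q * s.

Lemma good_bound (eps : R) w : 0 < eps ->
  (#|Kw Ev w|%:R - m%:R * delta) ^+ 2 < tt0 eps ->
  (1 - eps / 2) * delta < m%:R^-1 * #|Kw Ev w|%:R.
Proof.
move=> e0; rewrite /tt0 => h.
have mpos : 0 < m%:R :> R by rewrite ltr0n.
have c0 : 0 < eps / 2 * (m%:R * delta) by rewrite mulr_gt0 // ?divr_gt0 ?mulr_gt0.
have h2 : - (eps / 2 * (m%:R * delta)) < #|Kw Ev w|%:R - m%:R * delta by nra.
rewrite [m%:R^-1 * _]mulrC ltr_pdivlMr //; lra.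
Qed.

Lemma a0_le1 w : m%:R^-1 * #|Kw Ev w|%:R <= 1 :> R.
Proof.
have mpos : 0 < m%:R :> R by rewrite ltr0n.
rewrite mulrC ler_pdivrMr // mul1r ler_nat.
by have := max_card (mem (Kw Ev w)); rewrite card_ord.
Qed.

Lemma hA0 w : A0hat (rho_star f g) (fun i => X i w) = m%:R^-1 * #|Kw Ev w|%:R.
Proof.
rewrite /A0hat cK; congr (_ * _); apply: eq_bigr => i _.
by rewrite /Kw inE asboolb.
Qed.

Lemma key_bayes (eps q : R) : 0 < eps <= 1 -> 4 * q ^+ 2 < eps ^+ 2 * m%:R * delta ->
  measurable [set w | (1 - eps) * TV PN Q <
     lambda_bayes q (rho_star f g) (fun i => X i w) (fun j => Y j w)] /\
  1 - 4 / (eps ^+ 2 * (m%:R * delta)) <= pr Pr [set w | (1 - eps) * TV PN Q <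
     lambda_bayes q (rho_star f g) (fun i => X i w) (fun j => Y j w)].
Proof.
move=> /andP[e0 e1] hq.
have mb1 : forall i, measurable [set w | (fun i w => rho_star f g (X i w) <= 2^-1) i w].
  by move=> i; exact: mEv.
have mb2 : forall j, measurable [set w | (fun j w => 2^-1 < rho_star f g (Y j w)) j w].
  move=> j.
  have -> : [set w | 2^-1 < rho_star f g (Y j w)] = Y j @^-1` (~` Aset).
    by apply/seteqP; split => w /=; rewrite ltNge => /negP.
  rewrite -[X in measurable X]setTI; apply: hiid.2.1 => //; exact/measurableC/mAset.
have mT := meas_pattern mb1 mb2 (fun u v => (1 - eps) * TV PN Q < lamb_b q u v).
split; first exact: mT.
apply: le_trans (conc_model e0) _.
apply: pr_le => //; first exact: (meas_pred mEv mGv (fun K : {set 'I_m} => (#|K|%:R - m%:R * delta) ^+ 2 < tt0 eps)).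
move=> w [Gw hw] /=.
rewrite /lambda_bayes hA0.
have -> : A1hat (rho_star f g) (fun j => Y j w) = 1.
  rewrite /A1hat (eq_bigr (fun _ => 1)); last first.
    move=> j _; have := Gw j Logic.I; rewrite /= => /negP.
    by rewrite -ltNge => ->.
  by rewrite sumr_const card_ord mulVf // pnatr_eq0 -lt0n.
rewrite subrr mulr0 mul0r addr0 addrK TV_delta.
apply: ineq_b.
- by rewrite e0 e1.
- exact: d0.
- by rewrite ltr0n.
- by rewrite a0_le1 andbT mulr_ge0 // invr_ge0 ler0n.
- exact: good_bound.
- exact: hq.
Qed.

Lemma key_oracle (eps q : R) : 0 < eps <= 1 -> 4 * q ^+ 2 < eps ^+ 2 * m%:R * delta ->
  measurable [set w | (1 - eps) * TV PN Q <
     lambda_oracle q PN Q (rho_star f g) (fun i => X i w) (fun j => Y j w) 2^-1] /\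
  1 - 4 / (eps ^+ 2 * (m%:R * delta)) <= pr Pr [set w | (1 - eps) * TV PN Q <
     lambda_oracle q PN Q (rho_star f g) (fun i => X i w) (fun j => Y j w) 2^-1].
Proof.
move=> /andP[e0 e1] hq.
have mb1 : forall i, measurable [set w | (fun i w => rho_star f g (X i w) <= 2^-1) i w].
  by move=> i; exact: mEv.
have mb2 : forall j, measurable [set w | (fun j w => rho_star f g (Y j w) <= 2^-1) j w].
  move=> j; change (measurable (Y j @^-1` Aset)).
  rewrite -[X in measurable X]setTI; apply: hiid.2.1 => //; exact: mAset.
have mT := meas_pattern mb1 mb2 (fun u v => (1 - eps) * TV PN Q <
   lamb_o q (sigma_or m n PN Q (rho_star f g) 2^-1) u v).
split; first exact: mT.
apply: le_trans (conc_model e0) _.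
apply: pr_le => //; first exact: (meas_pred mEv mGv (fun K : {set 'I_m} => (#|K|%:R - m%:R * delta) ^+ 2 < tt0 eps)).
move=> w [Gw hw] /=.
rewrite /lambda_oracle.
have -> : emp_cdf (rho_star f g) (fun j => Y j w) 2^-1 = 0.
  rewrite /emp_cdf big1 ?mulr0 // => j _.
  by have := Gw j Logic.I; rewrite /= => /negP/negbTE ->.
have -> : emp_cdf (rho_star f g) (fun i => X i w) 2^-1 = m%:R^-1 * #|Kw Ev w|%:R.
  exact: hA0.
have hp := prPA; have hq0 := prQA.
rewrite /sigma_or /cdf_of -/(pr PN Aset) -/(pr Q Aset) hp hq0.
rewrite !subr0 !mul0r addr0 TV_delta.
apply: ineq_o.
- by rewrite e0 e1.
- by rewrite d0 d1.
- by rewrite ltr0n.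
- exact: good_bound.
- exact: hq.
Qed.

End Model.

Lemma esup_bound {R : realType} (u : nat -> R) :
  limn_esup (fun N => (u N)%:E) \is a fin_num ->
  exists M : R, \forall N \near \oo, u N <= M.
Proof.
move=> hf; set L := limn_esup (fun N => (u N)%:E).
have hL : L = ereal_inf (range (esups (fun N => (u N)%:E))).
  rewrite /L limn_esup_lim; apply/cvg_lim => //; exact: cvg_esups_inf.
have : (ereal_inf (range (esups (fun N => (u N)%:E))) < (fine L + 1)%:E)%E.
  have e : ((fine L)%:E = L)%E by exact: fineK.
  by rewrite -hL -{1}e lte_fin ltrDl ltr01.
case/ereal_inf_lt => _ [n0 _ <-] h.
exists (fine L + 1); exists n0 => // N /= n0N.
rewrite -lee_fin; apply: le_trans (ltW h).
by apply: ereal_sup_ubound; exists N.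
Qed.

Lemma md_big {R : realType} (m : nat -> nat) (pi gamma : R) (delta : nat -> R) :
  0 < pi -> (fun N => (m N)%:R / (N%:R : R)) @ \oo --> pi -> -1 < gamma ->
  (forall N, 0 < delta N) ->
  limn_esup (fun N => ((N%:R : R) `^ gamma / delta N)%:E) \is a fin_num ->
  forall B, \forall N \near \oo, B < (m N)%:R * delta N.
Proof.
move=> pi0 hm g1 d0 hf B.
have [M hM] := esup_bound hf.
set M' := Num.max M 1.
have M'0 : 0 < M' by rewrite lt_max ltr01 orbT.
have MM' : M <= M' by rewrite le_max lexx.
set a := 1 + gamma.
have a0 : 0 < a by rewrite /a; lra.
set c := `|B| * 2 * M' / pi.
have c0 : 0 <= c.
  apply: divr_ge0; last exact: ltW.
  by apply: mulr_ge0; [apply: mulr_ge0|exact: ltW].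
set K := (c + 1) `^ a^-1.
have hpi' : \forall N \near \oo, pi / 2 < (m N)%:R / N%:R.
  have := @cvgr_gt R _ _ _ _ _ hm (pi / 2).
  by apply; lra.
near=> N.
have N1 : (1 <= N)%N by near: N; exact: nbhs_infty_ge.
have w0 : 0 < N%:R :> R by rewrite ltr0n.
have hN : N%:R `^ gamma / delta N <= M by near: N; exact: hM.
have hmN : pi / 2 < (m N)%:R / N%:R by near: N; exact: hpi'.
have hK : K < N%:R by near: N; exact: nbhs_infty_gtr.
have hNa : c + 1 < N%:R * N%:R `^ gamma.
  have -> : N%:R * N%:R `^ gamma = N%:R `^ a.
    rewrite -(@mulr_powRB1 _ N%:R a); [|exact: ltW|exact: a0].
    by congr (_ * (_ `^ _)); rewrite /a; ring.
  have := gt0_ltr_powR a0 _ _ hK; rewrite -powRrM mulVf ?gt_eqF // powRr1; last lra.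
  by apply; rewrite nnegrE ?powR_ge0 ?ltW.
have h1 : N%:R `^ gamma <= M' * delta N.
  by rewrite -ler_pdivrMr ?d0 // (le_trans hN).
set x := ((m N)%:R / N%:R : R).
have -> : (m N)%:R = x * N%:R by rewrite /x divfK // gt_eqF.
set y := ((N%:R : R) `^ gamma) in hNa h1.
set w := (N%:R : R) in hNa h1 w0 hmN *.
have wz : 0 < w * delta N by rewrite mulr_gt0.
have e1 : pi / 2 * (w * delta N) < x * (w * delta N) by rewrite ltr_pM2r.
have e2 : w * y <= M' * (w * delta N).
  by rewrite mulrCA ler_pM2l.
have e3 : c * pi = `|B| * 2 * M' by rewrite /c divfK // gt_eqF.
have e4 : c < M' * (w * delta N) by lra.
have e5 : `|B| * 2 * M' < pi * (M' * (w * delta N)).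
  by rewrite -e3 mulrC ltr_pM2l.
have e6 : `|B| < pi / 2 * (w * delta N).
  rewrite -(ltr_pM2l M'0); move: e5; rewrite (mulrC pi); nra.
have := ler_norm B; rewrite -mulrA; lra.
Unshelve. all: by end_near.
Qed.

Lemma inf_m1 {R : realType} (E : set R) : E (-1) -> (forall x, E x -> -1 <= x) ->
  inf E = -1.
Proof.
move=> E1 lb; apply/le_anti/andP; split.
  by apply: ge_inf => //; exists (-1).
by apply: lb_le_inf => //; exists (-1).
Qed.

Lemma conv_from {R : realType} (eps : R) (u v : nat -> R) : 0 < eps ->
  (forall B, \forall N \near \oo, B < v N) ->
  (\forall N \near \oo, 1 - 4 / (eps ^+ 2 * v N) <= u N /\ u N <= 1) ->
  u @ \oo --> (1 : R).
Proof.
move=> e0 hv hu; apply/cvgrPdist_le => e ep.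
have e2 : 0 < eps ^+ 2 by rewrite exprn_gt0.
near=> N.
have [h1 h2] : 1 - 4 / (eps ^+ 2 * v N) <= u N /\ u N <= 1 by near: N.
have h3 : 4 / (eps ^+ 2 * e) < v N by near: N; exact: hv.
have ee : 0 < eps ^+ 2 * e by rewrite mulr_gt0.
have h4 : 0 < 4 / (eps ^+ 2 * e) by rewrite divr_gt0.
have v0 : 0 < v N by apply: lt_trans h4 h3.
have ev : 0 < eps ^+ 2 * v N by rewrite mulr_gt0.
rewrite ltr_pdivrMr // in h3.
have h5 : 4 / (eps ^+ 2 * v N) <= e.
  rewrite ler_pdivrMr //; nra.
rewrite ger0_norm; lra.
Unshelve. all: by end_near.
Qed.

Unset Implicit Arguments.
Set Strict Implicit.

Theorem proposition4 (R : realType) (d : measure_display) (T : measurableType d)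
  (Q C : probability T R)
  (Hdisj : exists S : set T, measurable S /\ Q (~` S) = 0%E /\ C S = 0%E)
  (m n : nat -> nat)
  (Hmn : forall N, (2 <= N)%N -> (0 < m N)%N /\ (m N <= n N)%N /\ (m N + n N)%N = N)
  (pi : R) (Hpi : 0 < pi < 1)
  (Hlim : (fun N => (m N)%:R / (N%:R : R)) @ \oo --> pi)
  (alpha : R) (Halpha : 0 < alpha < 1)
  (q : R) (Hq : fine (normal_prob 0 1 [set x : R | x <= q]) = 1 - alpha)
  (eps : R) (Heps : 0 < eps <= 1) :
  gamma_bayes Q C m n q eps = -1 /\ gamma_oracle Q C m n q eps = -1.
Proof.
case: Hdisj => S [mS [QS CS]].
have pi0 : 0 < pi by case/andP: Hpi.
have e0 : 0 < eps by case/andP: Heps.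
have e2 : 0 < eps ^+ 2 by rewrite exprn_gt0.
have common : forall (gamma : R) (delta : nat -> R) (P : nat -> probability T R),
    -1 < gamma -> in_model Q C delta P ->
    asymp (fun N => TV (P N) Q) (fun N => (N%:R : R) `^ gamma) ->
    [/\ forall N, 0 < delta N, forall N, delta N < 1 &
     \forall N \near \oo, [/\ (0 < m N)%N, (0 < n N)%N &
        4 * q ^+ 2 < eps ^+ 2 * (m N)%:R * delta N]] /\
    forall B, \forall N \near \oo, B < (m N)%:R * delta N.
  move=> gamma delta P g1 [hd hPm] [_ has2].
  have d0 N : 0 < delta N by case/andP: (hd N).
  have d1 N : delta N < 1 by case/andP: (hd N).
  have hTV N : TV (P N) Q = delta N := TV_delta mS QS CS (d0 N) (hPm N).
  have e : (fun N => ((N%:R : R) `^ gamma / TV (P N) Q)%:E) =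
           (fun N => ((N%:R : R) `^ gamma / delta N)%:E).
    by apply: funext => N; rewrite hTV.
  rewrite e in has2.
  have hmd := md_big pi0 Hlim g1 d0 has2.
  split => //; split => //.
  near=> N.
  have N2 : (2 <= N)%N by near: N; exact: nbhs_infty_ge.
  have [m0 [mn _]] := Hmn N N2.
  split => //; first exact: leq_trans mn.
  have h : 4 * q ^+ 2 / eps ^+ 2 < (m N)%:R * delta N by near: N; exact: hmd.
  by rewrite ltr_pdivrMr // in h; rewrite -mulrA [eps ^+ 2 * _]mulrC.
have hb : bayes_ok Q C m n q eps (-1).
  move=> gamma /andP[g1 _] delta P hmod has mu f g hdens dO Omega Pr X Y hiid.
  have [[d0 d1 hN] hmd] := common gamma delta P g1 hmod has.
  case: hmod => _ hPm.
  apply: (conv_from (v := fun N => (m N)%:R * delta N) e0 hmd).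
  near=> N.
  have [m0 n0 hq] : [/\ (0 < m N)%N, (0 < n N)%N &
        4 * q ^+ 2 < eps ^+ 2 * (m N)%:R * delta N] by near: N.
  have [mT hk] := key_bayes mS QS CS (d0 N) (hPm N) (hdens N).1 (hdens N).2
    (hiid N) m0 n0 Heps hq.
  split; first exact: hk.
  exact: pr_le1 mT.
have ho : oracle_ok Q C m n q eps (-1).
  move=> gamma /andP[g1 _] delta P hmod has mu f g hdens.
  exists (fun _ => 2^-1); split.
    move=> N; apply/andP; split; first by rewrite invr_ge0 ler0n.
    by rewrite invf_le1 // ?ler1n // ltr0n.
  move=> dO Omega Pr X Y hiid.
  have [[d0 d1 hN] hmd] := common gamma delta P g1 hmod has.
  case: hmod => _ hPm.
  apply: (conv_from (v := fun N => (m N)%:R * delta N) e0 hmd).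
  near=> N.
  have [m0 n0 hq] : [/\ (0 < m N)%N, (0 < n N)%N &
        4 * q ^+ 2 < eps ^+ 2 * (m N)%:R * delta N] by near: N.
  have [mT hk] := key_oracle mS QS CS (d0 N) (d1 N) (hPm N) (hdens N).1 (hdens N).2
    (hiid N) m0 Heps hq.
  split; first exact: hk.
  exact: pr_le1 mT.
split; apply: inf_m1.
- by split => //; rewrite lexx ltrN10.
- by move=> x [/andP[]].
- by split => //; rewrite lexx ltrN10.
- by move=> x [/andP[]].
Unshelve. all: by end_near.
Qed.
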